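(* Let $n\ge 1$ and let $\alpha\in IS_n$ be a non-zero idempotent of rank $k$ (i.e. $|\operatorname{im}\alpha|=k$). Then the degree of the vertex $L_\alpha$ in $\mathcal{SP}_L(IS_n)$ equals $2^n-2^{n-k}-1$.
   Context: $IS_n$ is the set of all partial injective maps of an $n$-element set $X$, with composition written left to right ($\alpha\beta$ means first $\alpha$, then $\beta$); its zero is the empty map; its idempotents are the partial identities on subsets of $X$. For $a\in IS_n$, $S^1a=\{sa:s\in IS_n\}\cup\{a\}$. $\mathcal{P}_L(IS_n)$ is the simple graph on the non-empty partial injections with distinct $a,b$ adjacent iff $S^1a\cap S^1b$ contains a non-empty map. $L_a$ is the Green $\mathcal{L}$-class of $a$ ($a\,\mathcal{L}\,b$ iff $S^1a=S^1b$). $\mathcal{SP}_L(IS_n)$ is the simple graph with vertex set $\{L_a: a \text{ non-empty}\}$, distinct $L_a,L_b$ adjacent iff $a,b$ are adjacent in $\mathcal{P}_L(IS_n)$. *)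

(* Defs.v *)
From mathcomp Require Import all_boot.
Set Implicit Arguments. Unset Strict Implicit. Unset Printing Implicit Defensive.

(* Partial maps of X = 'I_n, as finite functions 'I_n -> option 'I_n
   (None = undefined). *)
Definition pinjb (n : nat) (f : {ffun 'I_n -> option 'I_n}) : bool :=
  [forall x, forall y, ((f x != None) && (f x == f y)) ==> (x == y)].

Definition IS (n : nat) := {f : {ffun 'I_n -> option 'I_n} | pinjb f}.

(* Left-to-right composition: (fcomp f g) = first f, then g. *)
Definition fcomp (n : nat) (f g : {ffun 'I_n -> option 'I_n}) :
  {ffun 'I_n -> option 'I_n} := [ffun x => obind g (f x)].

Definition pi_nonempty (n : nat) (a : IS n) : bool := [exists x, val a x != None].

Definition is_idem (n : nat) (a : IS n) : bool := fcomp (val a) (val a) == val a.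

Definition pi_im (n : nat) (a : IS n) : {set 'I_n} :=
  [set y | [exists x, val a x == Some y]].
Definition pi_rank (n : nat) (a : IS n) : nat := #|pi_im a|.

Definition S1 (n : nat) (a : IS n) : {set IS n} :=
  [set c : IS n | (c == a) || [exists s : IS n, val c == fcomp (val s) (val a)]].

Definition Lrel (n : nat) (a b : IS n) : bool := S1 a == S1 b.
Definition Lclass (n : nat) (a : IS n) : {set IS n} := [set b | Lrel a b].

Definition PLadj (n : nat) (a b : IS n) : bool :=
  [&& pi_nonempty a, pi_nonempty b, a != b &
     [exists c : IS n, [&& pi_nonempty c, c \in S1 a & c \in S1 b]]].

Definition SPverts (n : nat) : {set {set IS n}} :=
  [set Lclass a | a in [pred a : IS n | pi_nonempty a]].

Definition SPadj (n : nat) (C D : {set IS n}) : bool :=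
  [&& C \in SPverts n, D \in SPverts n, C != D &
     [exists a in C, exists b in D, PLadj a b]].

Definition SPdegree (n : nat) (C : {set IS n}) : nat :=
  #|[set D in SPverts n | SPadj C D]|.

(* Main.v *)
Require Import Defs.
From mathcomp Require Import all_boot.
From mathcomp Require Import zify.
Set Implicit Arguments. Unset Strict Implicit. Unset Printing Implicit Defensive.

Lemma card_sets_ord n : #|{set 'I_n}| = 2 ^ n.
Proof. have := card_powerset [set: 'I_n]. rewrite cardsT card_ord => <-. rewrite -cardsT. apply: eq_card => B; by rewrite !inE subsetT. Qed.

Definition pidf n (B : {set 'I_n}) : {ffun 'I_n -> option 'I_n} :=
  [ffun x => if x \in B then Some x else None].

Lemma pidP n (B : {set 'I_n}) : pinjb (pidf B).
Proof.
apply/forallP=> x; apply/forallP=> y; apply/implyP; rewrite /pidf !ffunE.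
by case: (x \in B); case: (y \in B) => //= /andP[_ /eqP[->]].
Qed.

Definition pid n (B : {set 'I_n}) : IS n := exist _ (pidf B) (pidP B).

Lemma im_pid n (B : {set 'I_n}) : pi_im (pid B) = B.
Proof.
apply/setP => y; rewrite inE; apply/existsP/idP => [[x]|Hy].
  rewrite /= /pidf ffunE; by case: ifP => // Hx /eqP[<-].
by exists y; rewrite /= /pidf ffunE Hy.
Qed.

Lemma S1P n (a c : IS n) : (c \in S1 a) = (pi_im c \subset pi_im a).
Proof.
rewrite inE; apply/idP/idP.
- case/orP => [/eqP -> | /existsP [s /eqP Hc]]; first exact: subxx.
  apply/subsetP => y; rewrite !inE => /existsP [x /eqP Hx].
  rewrite Hc ffunE in Hx. case E: (val s x) Hx => [z|] //= Hz.
  by apply/existsP; exists z; rewrite Hz.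
- move=> Hsub; apply/orP; right.
  pose sf := [ffun x => obind (fun y => [pick z | val a z == Some y]) (val c x)].
  have Hs : pinjb sf.
    apply/forallP=> x; apply/forallP=> x'; apply/implyP=> /andP[Hn /eqP He].
    rewrite /sf !ffunE in Hn He.
    case Ex: (val c x) Hn He => [y|] //=; case Ex': (val c x') => [y'|] //=; last by move=> H1 H2; rewrite H2 in H1.
    case: pickP => [z /eqP Hz|] //= _; case: pickP => [z' /eqP Hz'|] //= [Ezz'].
    move: Hz'; rewrite -Ezz' Hz => -[Eyy'].
    move: (valP c) => /forallP/(_ x)/forallP/(_ x')/implyP; apply.
    by rewrite Ex Ex' Eyy' eqxx.
  apply/existsP; exists (exist _ sf Hs); apply/eqP/ffunP => x; rewrite /= !ffunE.
  case Ex: (val c x) => [y|] //=.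
  have : y \in pi_im a.
    by apply: (subsetP Hsub); rewrite inE; apply/existsP; exists x; rewrite Ex.
  rewrite inE => /existsP [z /eqP Hz].
  case: pickP => [z' /eqP Hz' //|/(_ z)]; by rewrite Hz eqxx.
Qed.

Lemma LrelP n (a b : IS n) : Lrel a b = (pi_im a == pi_im b).
Proof.
rewrite /Lrel; apply/eqP/eqP => [E|E].
  apply/eqP; rewrite eqEsubset -!S1P -E S1P subxx /=.
  by rewrite S1P -S1P E S1P subxx.
by apply/setP => c; rewrite !S1P E.
Qed.

Lemma LclassE n (a b : IS n) : (Lclass a == Lclass b) = (pi_im a == pi_im b).
Proof.
apply/eqP/eqP => [E|E].
  have : b \in Lclass a by rewrite E inE LrelP.
  by rewrite inE LrelP => /eqP.
by apply/setP => c; rewrite !inE !LrelP E.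
Qed.

Lemma nonemptyE n (a : IS n) : pi_nonempty a = (pi_im a != set0).
Proof.
rewrite /pi_nonempty; apply/existsP/set0Pn => [[x]|[y]].
  case E: (val a x) => [y|] // _; exists y; rewrite inE; apply/existsP; exists x; by rewrite E.
by rewrite inE => /existsP [x /eqP E]; exists x; rewrite E.
Qed.

Theorem mainTheorem14 (n : nat) (alpha : IS n) :
  1 <= n -> pi_nonempty alpha -> is_idem alpha ->
  SPdegree (Lclass alpha) = 2 ^ n - 2 ^ (n - pi_rank alpha) - 1.
Proof.
move=> _ Hne _. rewrite /pi_rank. set A := pi_im alpha.
have HA : A != set0 by rewrite -nonemptyE.
have Hv : forall a : IS n, pi_nonempty a -> Lclass a \in SPverts n.
  by move=> a Ha; apply/imsetP; exists a.
have Heq : [set D in SPverts n | SPadj (Lclass alpha) D] =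
   [set Lclass (pid B) | B in [set B : {set 'I_n} | (B :&: A != set0) && (B != A)]].
  apply/setP => D; apply/idP/idP.
  - rewrite inE => /andP [HD Hadj]. case/imsetP: HD => d; rewrite inE => Hd HDd.
    apply/imsetP; exists (pi_im d); last by rewrite HDd; apply/eqP; rewrite LclassE im_pid.
    rewrite inE. rewrite HDd in Hadj.
    move: Hadj => /and4P [_ _ Hneq /existsP [a' /andP [Ha' /existsP [b' /andP [Hb' Hab]]]]].
    rewrite inE LrelP in Ha'; rewrite inE LrelP in Hb'.
    move: Hab => /and4P [_ _ _ /existsP [c /and3P [Hc Hca Hcb]]].
    rewrite !S1P -(eqP Ha') -(eqP Hb') in Hca Hcb.
    apply/andP; split.
      rewrite nonemptyE in Hc; case/set0Pn: Hc => y Hy; apply/set0Pn; exists y.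
      by rewrite inE (subsetP Hcb _ Hy) (subsetP Hca _ Hy).
    apply: contra Hneq => /eqP E. by rewrite LclassE E.
  - case/imsetP => B + ->; rewrite [B \in _]inE => /andP [HBA HBne].
    have HB0 : B != set0 by apply: contraNneq HBA => ->; rewrite set0I.
    have HpB : pi_nonempty (pid B) by rewrite nonemptyE im_pid.
    rewrite inE Hv //=. apply/and4P; split; [exact: Hv | exact: Hv | |].
      by rewrite LclassE im_pid eq_sym.
    apply/existsP; exists alpha; rewrite inE LrelP eqxx /=.
    apply/existsP; exists (pid B); rewrite inE LrelP eqxx /=.
    apply/and4P; split => //.
      by apply/negP => /eqP E; move: HBne; rewrite /A E im_pid eqxx.
    apply/existsP; exists (pid (B :&: A)).
    by rewrite nonemptyE !S1P !im_pid subsetIl subsetIr HBA.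
rewrite /SPdegree Heq card_imset; last first.
  by move=> B1 B2 /eqP; rewrite LclassE !im_pid => /eqP.
set Q := [set B : {set 'I_n} | B :&: A != set0].
have HP : [set B : {set 'I_n} | (B :&: A != set0) && (B != A)] = Q :\ A.
  by apply/setP => B; rewrite !inE andbC.
have HAQ : A \in Q by rewrite inE setIid.
have Hc : #|Q| = #|Q :\ A| + 1 by rewrite (cardsD1 A Q) HAQ addnC.
have HQ : Q = ~: powerset (~: A).
  by apply/setP => B; rewrite !inE setI_eq0 disjoints_subset.
have H1 := cardsC (powerset (~: A)).
rewrite card_sets_ord card_powerset -HQ in H1.
have H2 : #|~: A| = n - #|A| by rewrite cardsCs setCK card_ord.
rewrite H2 in H1. rewrite HP.
move: H1 Hc; set p := 2 ^ (n - #|A|); set N := 2 ^ n. lia.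
Qed.
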